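(* Let $n\ge 3$ be odd and let $D_{2n}$ be the dihedral group of order $2n$. Then $\Gamma_{D_{2n},H}$ admits a perfect code for every normal subgroup $H$ of $D_{2n}$.
   Context: For a normal subgroup $H$ of a finite group $G$ with identity $e$, the subgroup sum graph $\Gamma_{G,H}$ is the simple undirected graph with vertex set $G$ in which distinct vertices $x,y$ are adjacent if and only if $xy\in H\setminus\{e\}$. A perfect code in a graph is a set $C$ of vertices that is independent and such that every vertex not in $C$ is adjacent to exactly one vertex of $C$. *)

(* Defs.v *)
From HB Require Import structures.
From mathcomp Require Import all_boot fingroup extremal.
Set Implicit Arguments.
Unset Strict Implicit.
Unset Printing Implicit Defensive.
Local Open Scope group_scope.

(* Subgroup sum graph Gamma_{G,H} on the vertex set of the (full) group gT:
   distinct x, y are adjacent iff x * y \in H \ {1}. *)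
Definition ssg_adj (gT : finGroupType) (H : {set gT}) : rel gT :=
  fun x y => (x != y) && (x * y \in H :\ 1).

Definition perfect_code (T : finType) (e : rel T) (C : {set T}) : Prop :=
  (forall x y, x \in C -> y \in C -> x != y -> ~~ e x y) /\
  (forall v, v \notin C -> #|[set c in C | e v c]| = 1%N).

Definition has_perfect_code (T : finType) (e : rel T) : Prop :=
  exists C : {set T}, perfect_code e C.

(* Main.v *)
Require Import Defs.
From HB Require Import structures.
From mathcomp Require Import all_boot fingroup extremal presentation morphism.
Set Implicit Arguments.
Unset Strict Implicit.
Local Open Scope group_scope.
Definition Srel (gT : finGroupType) (H : {set gT}) (v w : gT) : bool :=
  (v * w^-1 \in H) || (v * w \in H).

Definition Sset (gT : finGroupType) (H : {set gT}) (v : gT) : {set gT} :=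
  [set w | Srel H v w].

Definition cpick (gT : finGroupType) (A : {set gT}) : gT :=
  odflt 1 [pick a in A | (a * a == 1) || ~~ [exists b in A, b * b == 1]].

Definition Ccode (gT : finGroupType) (H : {set gT}) : {set gT} :=
  [set y | (y == cpick (Sset H y)) || (y == (cpick (Sset H y))^-1)].

Lemma swapH (gT : finGroupType) (H : {group gT}) (HnG : H <| [set: gT]) (x y : gT) :
  x * y \in H -> y * x \in H.
Proof.
move=> Hxy; have Nx : x \in 'N(H) by rewrite (subsetP (normal_norm HnG)) ?inE.
have e : (x * y) ^ x = y * x by rewrite conjgE -!mulgA mulKg.
by rewrite -e memJ_norm.
Qed.

Lemma Srel_refl (gT : finGroupType) (H : {group gT}) v : Srel H v v.
Proof. by rewrite /Srel mulgV group1. Qed.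

Lemma Srel_sym (gT : finGroupType) (H : {group gT}) (HnG : H <| [set: gT]) v w :
  Srel H v w -> Srel H w v.
Proof.
case/orP=> h; apply/orP; [left | right].
  by rewrite -(invgK w) -invMg groupV.
exact: swapH.
Qed.

Lemma Srel_trans (gT : finGroupType) (H : {group gT}) (HnG : H <| [set: gT]) v w u :
  Srel H v w -> Srel H w u -> Srel H v u.
Proof.
case/orP=> h1 /orP[] h2; apply/orP.
- by left; have := groupM h1 h2; rewrite mulgA mulgKV.
- by right; have := groupM h1 h2; rewrite mulgA mulgKV.
- right; have h3 : u * w^-1 \in H by rewrite -(invgK u) -invMg groupV.
  have h4 := swapH HnG h3.
  by have := groupM h1 h4; rewrite mulgA mulgK.
- left; have h3 := swapH HnG h2; rewrite -groupV invMg in h3.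
  by have := groupM h1 h3; rewrite mulgA mulgK.
Qed.

Lemma Sset_eq (gT : finGroupType) (H : {group gT}) (HnG : H <| [set: gT]) v w :
  w \in Sset H v -> Sset H w = Sset H v.
Proof.
rewrite inE => hvw; apply/setP=> u; rewrite !inE; apply/idP/idP => h.
  exact: Srel_trans hvw h.
exact: Srel_trans (Srel_sym HnG hvw) h.
Qed.

Lemma cpick_in (gT : finGroupType) (A : {set gT}) v : v \in A -> cpick A \in A.
Proof.
move=> vA; rewrite /cpick; case: pickP => [a /andP[] // | none].
case: (boolP [exists b in A, b * b == 1]) => [/existsP[b /andP[bA bb]] | nob].
  by have := none b; rewrite bA bb.
by have := none v; rewrite vA nob orbT.
Qed.

Lemma cpick_inv (gT : finGroupType) (A : {set gT}) b :
  b \in A -> b * b = 1 -> cpick A * cpick A = 1.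
Proof.
move=> bA bb; rewrite /cpick; case: pickP => [a /andP[aA /orP[/eqP // | /negP[]]] | none].
  by apply/existsP; exists b; rewrite bA bb eqxx.
by have := none b; rewrite bA bb eqxx.
Qed.

Lemma general_pc (gT : finGroupType) (H : {group gT}) (HnG : H <| [set: gT])
  (K : forall a : gT, a * a \in H -> a * a = 1 \/ a \in H) :
  has_perfect_code (ssg_adj H).
Proof.
pose c v := cpick (Sset H v).
have cin v : c v \in Sset H v by apply: cpick_in (v) _; rewrite inE Srel_refl.
have ceq v w : Srel H v w -> c w = c v.
  by move=> h; rewrite /c (Sset_eq HnG (v := v)) // inE.
have Cmem v u : Srel H v u -> (u \in Ccode H) = (u == c v) || (u == (c v)^-1).
  by move=> h; rewrite inE -/(c u) (ceq _ _ h).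
have ainv v : c v * c v \in H -> (c v)^-1 = c v.
  move=> h; have cc : c v * c v = 1.
    case: (K _ h) => // aH; apply: (cpick_inv (b := 1)) (mulg1 1).
    rewrite inE; apply: (Srel_trans HnG (w := c v)).
      by rewrite -inE; apply: cin.
    by rewrite /Srel invg1 mulg1 aH.
  by apply/eqP; rewrite eq_invg_mul cc.
exists (Ccode H); split.
  move=> x y xC yC nxy; apply/negP => /andP[_]; rewrite !inE => /andP[nxy1 xyH].
  have hxy : Srel H x y by rewrite /Srel xyH orbT.
  have hxx := Srel_refl H x.
  rewrite (Cmem x x hxx) in xC; rewrite (Cmem x y hxy) in yC.
  move: xC yC nxy nxy1; move: (c x) => a.
  case/orP => /eqP ->; case/orP => /eqP ->; by rewrite ?eqxx ?mulgV ?mulVg ?eqxx.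
move=> v vC.
set a := c v.
have av : Srel H v a by rewrite -inE; apply: cin.
have aiv : Srel H v a^-1 by move: av; rewrite /Srel invgK orbC.
pose t := if v * a \in H then a else a^-1.
have tv : Srel H v t by rewrite /t; case: ifP.
have tC : t \in Ccode H by rewrite (Cmem v t tv) /t; case: ifP; rewrite eqxx ?orbT.
suff -> : [set c0 in Ccode H | ssg_adj H v c0] = [set t] by rewrite cards1.
apply/setP => w; rewrite in_set1 in_set; apply/idP/idP.
  case/andP=> wC /andP[nvw]; rewrite !inE => /andP[nvw1 vwH].
  have hw : Srel H v w by rewrite /Srel vwH orbT.
  rewrite (Cmem v w hw) -/a in wC.
  move: vwH; case/orP: wC => /eqP -> vwH; rewrite /t.
    by rewrite vwH.
  case: ifP => // vaH.
  have h2 : a * a \in H.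
    have := groupM (groupVr vaH) vwH.
    by rewrite invMg -mulgA mulKg -invMg groupV.
  by rewrite (ainv v h2).
move/eqP => ->; rewrite tC /= /ssg_adj.
have nvt : v != t by apply: contraNneq vC => ->.
rewrite nvt !inE /=.
have vtH : v * t \in H.
  by rewrite /t; case: ifP => // vaH; move: av; rewrite /Srel vaH orbF.
rewrite vtH andbT.
apply: contraNneq vC => e.
have -> : v = t^-1 by apply/eqP; rewrite eq_mulgV1 invgK e.
have tiv : Srel H v t^-1 by rewrite /t; case: ifP; rewrite ?invgK.
rewrite (Cmem v _ tiv) /t; case: ifP; by rewrite ?invgK eqxx ?orbT.
Qed.
Lemma dih_key (n : nat) (Hn3 : 3 <= n) (Hodd : odd n)
  (H : {group 'D_(n.*2)}) (a : 'D_(n.*2)) : a * a \in H -> a * a = 1 \/ a \in H.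
Proof.
have q_gt1 : 1 < n by apply: leq_trans Hn3.
have := isoGrp_hom (Grp_dihedral q_gt1).
case/existsP=> -[x y] /= /eqP[defG xn y2 xy].
have nxy : y \in 'N(<[x]>).
  by rewrite inE -cycleJ xy cycleV.
have : a \in <[x]> * <[y]>.
  by rewrite -norm_joinEr ?cycle_subG // defG inE.
case/mulsgP=> u v /cycleP[i ->] /cycleP[j ->] ->{a}.
have -> : y ^+ j = y ^+ odd j.
  by rewrite -{1}(odd_double_half j) expgD -[j./2.*2]mul2n expgM y2 expg1n mulg1.
have yV : y^-1 = y by apply/eqP; rewrite eq_invg_mul -expg2 y2.
case: (odd j) => /=; last first.
  rewrite mulg1 => Ha; right.
  have an : (x ^+ i) ^+ n = 1 by rewrite -expgM mulnC expgM xn expg1n.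
  have -> : x ^+ i = ((x ^+ i) ^+ 2) ^+ (n.+1)./2.
    have e : (2 * (n.+1)./2)%N = n.+1.
      by rewrite mul2n -[in RHS](odd_double_half n.+1) /= Hodd.
    by rewrite -expgM e expgS an mulg1.
  by rewrite groupX // expg2.
move=> _; left.
rewrite ?mulg1 expg1 -{1}yV -mulgA.
have -> : y^-1 * (x ^+ i * y) = (x ^+ i) ^ y by [].
by rewrite conjXg xy expgVn mulgV.
Qed.

Theorem proposition4p2 (n : nat) (Hn3 : 3 <= n) (Hodd : odd n)
  (H : {group 'D_(n.*2)}) (HnG : (H <| [set: 'D_(n.*2)])%g) :
  has_perfect_code (ssg_adj H).
Proof.
apply: general_pc HnG _ => a ha.
exact: dih_key Hn3 Hodd H a ha.
Qed.
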